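(* Let $d\ge3$ be an integer, $p_1,\dots,p_d\in(0,1)$, $q_j=1-p_j$, $P=\prod_{j=1}^dp_jq_j^{-1}$, and $\lambda\in(0,1)$. For every integer $n\ge N(P^{1/d},\lambda)$, $$\sum_{k=0}^n\binom nk^dP^k\le\left(\frac{M(P^{1/d},\lambda)}{\sqrt{2\pi}}\right)^{d-1}n^{-\frac{d-1}{2}}\left(1+P^{1/d}\right)^{dn}.$$
   Context: For $\alpha>0$, $\lambda\in(0,1)$: $N(\alpha,\lambda)=\max\{[\alpha/\lambda]+1,[1/(\lambda\alpha)]+1\}$, where $[x]$ is the greatest integer $\le x$, and $M(\alpha,\lambda)=\frac{\alpha+1}{\sqrt\alpha}\cdot\frac1{1-\lambda}$. *)

(* Defs.v *)
From Stdlib Require Import Reals Lra Lia ZArith List.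
Open Scope R_scope.

Definition floorZ (x : R) : Z := Int_part x.

(* N(alpha,lambda) = max{[alpha/lambda]+1, [1/(lambda alpha)]+1}; since
   alpha>0, lambda in (0,1) both arguments are positive, so this is a nat. *)
Definition Ncutoff (alpha lambda : R) : nat :=
  Nat.max (Z.to_nat (floorZ (alpha / lambda) + 1))
          (Z.to_nat (floorZ (1 / (lambda * alpha)) + 1)).

Definition Mbound (alpha lambda : R) : R :=
  (alpha + 1) / sqrt alpha * (1 / (1 - lambda)).

(* P = prod_{j=1}^d p_j / q_j, with q_j = 1 - p_j; p indexed 0..d-1 *)
Definition Pprod (d : nat) (p : nat -> R) : R :=
  fold_right Rmult 1 (map (fun j => p j / (1 - p j)) (seq 0 d)).

(* Main.v *)
Require Import Defs.
From Stdlib Require Import Reals.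
Open Scope R_scope.
From Stdlib Require Import Lra Lia Factorial ZArith List.
From Coquelicot Require Coquelicot.

Module CQ.
Import Coquelicot.Coquelicot.
Open Scope R_scope.

Lemma mono0 (f df : R -> R) (y : R) : 0 <= y ->
  (forall x, 0 <= x -> is_derive f x (df x)) ->
  (forall x, 0 <= x -> 0 <= df x) -> f 0 <= f y.
Proof.
  intros Hy Hd Hp.
  destruct (MVT_gen f 0 y df) as [c [Hc Heq]].
  - intros x Hx. apply Hd. unfold Rmin in Hx; destruct (Rle_dec 0 y); lra.
  - intros x Hx. apply continuity_pt_filterlim.
    apply (ex_derive_continuous (K:=R_AbsRing) (V:=R_NormedModule) f x).
    eexists. apply Hd. unfold Rmin in Hx; destruct (Rle_dec 0 y); lra.
  - assert (0 <= df c). apply Hp. unfold Rmin in Hc; destruct (Rle_dec 0 y); lra.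
    assert (0 <= df c * (y - 0)) by (apply Rmult_le_pos; lra). lra.
Qed.

Lemma ln_lower (y : R) : 0 <= y -> 2 * y / (2 + y) <= ln (1 + y).
Proof.
  intros Hy.
  pose (f := fun x => ln (1 + x) - 2 * x / (2 + x)).
  assert (f 0 <= f y).
  { apply (mono0 f (fun x => x ^ 2 / ((1 + x) * (2 + x) ^ 2))); auto.
    - intros x Hx. unfold f. auto_derive. lra.
      field. lra.
    - intros z Hz. apply Rmult_le_pos. apply pow2_ge_0. apply Rlt_le, Rinv_0_lt_compat.
      apply Rmult_lt_0_compat. lra. apply pow_lt. lra. }
  unfold f in H. rewrite Rplus_0_r, ln_1 in H. lra.
Qed.

Lemma ln_upper (y : R) : 0 <= y -> ln (1 + y) <= y - y ^ 2 / 2 + y ^ 3 / 3.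
Proof.
  intros Hy.
  pose (f := fun x => x - x ^ 2 / 2 + x ^ 3 / 3 - ln (1 + x)).
  assert (f 0 <= f y).
  { apply (mono0 f (fun x => x ^ 3 / (1 + x))); auto.
    - intros x Hx. unfold f. auto_derive. lra. field. lra.
    - intros z Hz. apply Rmult_le_pos. apply pow_le; lra. apply Rlt_le, Rinv_0_lt_compat. lra. }
  unfold f in H. rewrite Rplus_0_r, ln_1 in H. simpl in H. lra.
Qed.


Definition J (n : nat) := RInt (fun x => sin x ^ n) 0 (PI / 2).

Lemma cont_sinpow n x : continuous (fun x => sin x ^ n) x.
Proof. apply (ex_derive_continuous (K:=R_AbsRing) (V:=R_NormedModule)). auto_derive. trivial. Qed.

Lemma J_correct n : is_RInt (fun x => sin x ^ n) 0 (PI / 2) (J n).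
Proof. unfold J. apply (RInt_correct (V:=R_CompleteNormedModule)). apply (ex_RInt_continuous (V:=R_CompleteNormedModule)). intros; apply cont_sinpow. Qed.

Lemma J_rec n : INR (n + 2) * J (n + 2) = INR (n + 1) * J n.
Proof.
  assert (H1 : is_RInt (fun x => INR (n+2) * sin x ^ (n+2) - INR (n+1) * sin x ^ n) 0 (PI/2)
     (INR (n+2) * J (n+2) - INR (n+1) * J n)).
  { apply (is_RInt_minus (V:=R_NormedModule)); apply (is_RInt_scal (V:=R_NormedModule)); apply J_correct. }
  pose (F := fun x => - cos x * sin x ^ (n+1)).
  assert (H2 : is_RInt (fun x => INR (n+2) * sin x ^ (n+2) - INR (n+1) * sin x ^ n) 0 (PI/2)
     (minus (F (PI/2)) (F 0))).
  { apply (is_RInt_derive (V:=R_CompleteNormedModule) F).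
    - intros x _. unfold F. auto_derive. trivial.
      rewrite !plus_INR. simpl. rewrite !Nat.add_succ_r, Nat.add_0_r.
      simpl. pose proof (sin2_cos2 x). unfold Rsqr in H.
      replace (cos x * cos x) with (1 - sin x * sin x) by lra.
      simpl. ring_simplify. replace (cos x ^ 2) with (1 - sin x * sin x) by (simpl; lra). ring.
    - intros x _. apply (ex_derive_continuous (K:=R_AbsRing) (V:=R_NormedModule)). auto_derive. trivial. }
  unfold F in H2. rewrite cos_PI2, sin_0 in H2.
  assert (E: minus (- 0 * sin (PI / 2) ^ (n + 1)) (- cos 0 * 0 ^ (n + 1)) = 0).
  { rewrite Nat.add_1_r. simpl. unfold minus, plus, opp. simpl. ring. }
  rewrite E in H2.
  pose proof (filterlim_locally_unique _ _ _ H1 H2). 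
  lra.
Qed.

Lemma J0 : J 0 = PI / 2.
Proof.
  unfold J. apply is_RInt_unique.
  pose (F := fun x : R => x).
  replace (PI/2) with (minus (F (PI/2)) (F 0)) at 2 by (unfold F, minus, plus, opp; simpl; ring).
  apply (is_RInt_derive (V:=R_CompleteNormedModule) F).
  - intros x _. unfold F. auto_derive. trivial. simpl; ring.
  - intros x _. apply (ex_derive_continuous (K:=R_AbsRing) (V:=R_NormedModule)). auto_derive. trivial.
Qed.

Lemma J1 : J 1 = 1.
Proof.
  unfold J. apply is_RInt_unique.
  pose (F := fun x : R => - cos x).
  assert (E : minus (F (PI/2)) (F 0) = 1) by (unfold F, minus, plus, opp; simpl; rewrite cos_PI2, cos_0; ring).
  rewrite <- E.
  apply (is_RInt_derive (V:=R_CompleteNormedModule) F).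
  - intros x _. unfold F. auto_derive. trivial. simpl; ring.
  - intros x _. apply (ex_derive_continuous (K:=R_AbsRing) (V:=R_NormedModule)). auto_derive. trivial.
Qed.

Lemma J_mono n : J (S n) <= J n.
Proof.
  unfold J. apply RInt_le.
  - pose proof PI_RGT_0; lra.
  - apply (ex_RInt_continuous (V:=R_CompleteNormedModule)). intros; apply cont_sinpow.
  - apply (ex_RInt_continuous (V:=R_CompleteNormedModule)). intros; apply cont_sinpow.
  - intros x Hx. simpl. 
    assert (0 <= sin x) by (apply sin_ge_0; lra).
    assert (sin x <= 1) by apply SIN_bound.
    assert (0 <= sin x ^ n) by (apply pow_le; lra).
    nra.
Qed.

Fixpoint wa (m : nat) : R := match m with O => 1 | S k => wa k * (2 * INR k + 1) / (2 * INR k + 2) end.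

Lemma wa_pos m : 0 < wa m.
Proof. induction m; simpl. lra. pose proof (pos_INR m). apply Rmult_lt_0_compat. apply Rmult_lt_0_compat; lra. apply Rinv_0_lt_compat; lra. Qed.

Lemma J_even m : J (2 * m) = PI / 2 * wa m.
Proof.
  induction m. simpl. rewrite J0. ring.
  replace (2 * S m)%nat with (2 * m + 2)%nat by lia.
  pose proof (J_rec (2 * m)). rewrite IHm in H.
  rewrite !plus_INR, !mult_INR in H. simpl in H |- *.
  pose proof (pos_INR m).
  apply (Rmult_eq_reg_l ((1 + 1) * INR m + (1 + 1))). rewrite H. field. lra. lra.
Qed.

Lemma J_odd m : J (2 * m + 1) = 1 / ((2 * INR m + 1) * wa m).
Proof.
  induction m. simpl. rewrite J1. field.
  replace (2 * S m + 1)%nat with ((2 * m + 1) + 2)%nat by lia.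
  pose proof (J_rec (2 * m + 1)). rewrite IHm in H.
  set (X := J (2 * m + 1 + 2)) in *.
  rewrite !plus_INR, !mult_INR in H. simpl in H.
  pose proof (pos_INR m). pose proof (wa_pos m).
  rewrite S_INR. cbn [wa].
  apply (Rmult_eq_reg_l ((1 + 1) * INR m + 1 + (1 + 1))). rewrite H. field.
  repeat split; lra. lra.
Qed.

Lemma wallis m : PI * INR (S m) * wa (S m) ^ 2 <= 1.
Proof.
  pose proof (J_mono (2 * m + 1)).
  replace (S (2 * m + 1)) with (2 * S m)%nat in H by lia.
  rewrite J_even, J_odd in H.
  pose proof (wa_pos m). pose proof (pos_INR m). pose proof PI_RGT_0.
  simpl wa in *. rewrite S_INR.
  assert (Hs : 0 < (2 * INR m + 1) * wa m) by nra.
  apply Rmult_le_compat_r with (r := (2 * INR m + 1) * wa m) in H; [|lra].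
  replace (1 / ((2 * INR m + 1) * wa m) * ((2 * INR m + 1) * wa m)) with 1 in H by (field; lra).
  replace (PI * (INR m + 1) * (wa m * (2 * INR m + 1) / (2 * INR m + 2)) ^ 2)
    with (PI / 2 * (wa m * (2 * INR m + 1) / (2 * INR m + 2)) * ((2 * INR m + 1) * wa m)) by (field; lra).
  exact H.
Qed.

End CQ.
Import CQ.
Open Scope R_scope.

Lemma ln_le_inv x y : 0 < x -> 0 < y -> ln x <= ln y -> x <= y.
Proof. intros. rewrite <- (exp_ln x), <- (exp_ln y) by auto. destruct H1. left; apply exp_increasing; auto. rewrite H1; lra. Qed.

Lemma ln_le' x y : 0 < x -> x <= y -> ln x <= ln y.
Proof. intros. destruct H0. left; apply ln_increasing; auto. subst; lra. Qed.

Lemma ln_le_sub1 x : 0 < x -> ln x <= x - 1.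
Proof. intros. pose proof (exp_ineq1_le (ln x)). rewrite exp_ln in H0; lra. Qed.

Definition lf (m : nat) := ln (INR (fact m)).
Definition LS (m : nat) := 2 * lf m + 2 * INR m - (2 * INR m + 1) * ln (INR m).

Lemma lf_S m : lf (S m) = ln (INR (S m)) + lf m.
Proof. unfold lf. rewrite fact_simpl, mult_INR, ln_mult. auto. apply lt_0_INR; lia. apply INR_fact_lt_0. Qed.

Lemma LS_step m : (1 <= m)%nat -> 0 <= LS m - LS (S m) <= 1 / INR m - 1 / INR (S m).
Proof.
  intros Hm. assert (Hm' : 1 <= INR m) by (apply (le_INR 1); auto).
  assert (E : LS m - LS (S m) = (2 * INR m + 1) * ln (1 + 1 / INR m) - 2).
  { unfold LS. rewrite lf_S, S_INR.
    replace (1 + 1 / INR m) with ((INR m + 1) / INR m) by (field; lra).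
    unfold Rdiv. rewrite ln_mult, ln_Rinv by (try apply Rinv_0_lt_compat; lra). ring. }
  rewrite E, S_INR. split.
  - pose proof (ln_lower (1 / INR m)).
    assert (0 <= 1 / INR m) by (apply Rlt_le, Rdiv_lt_0_compat; lra).
    specialize (H H0).
    replace (2 * (1 / INR m) / (2 + 1 / INR m)) with (2 / (2 * INR m + 1)) in H by (field; lra).
    apply Rmult_le_compat_l with (r := 2 * INR m + 1) in H; [|lra].
    replace ((2 * INR m + 1) * (2 / (2 * INR m + 1))) with 2 in H by (field; lra). lra.
  - pose proof (ln_upper (1 / INR m)).
    assert (0 <= 1 / INR m) by (apply Rlt_le, Rdiv_lt_0_compat; lra).
    specialize (H H0).
    apply Rmult_le_compat_l with (r := 2 * INR m + 1) in H; [|lra].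
    apply Rle_trans with ((2 * INR m + 1) * (1 / INR m - (1 / INR m) ^ 2 / 2 + (1 / INR m) ^ 3 / 3) - 2); [lra|].
    replace ((2 * INR m + 1) * (1 / INR m - (1 / INR m) ^ 2 / 2 + (1 / INR m) ^ 3 / 3) - 2)
      with (1 / (6 * INR m ^ 2) + 1 / (3 * INR m ^ 3)) by (field; lra).
    replace (1 / INR m - 1 / (INR m + 1)) with (1 / (INR m * (INR m + 1))) by (field; lra).
    assert (1 / (3 * INR m ^ 3) <= 1 / (3 * INR m ^ 2)).
    { apply Rmult_le_compat_l; [lra|]. apply Rinv_le_contravar. nra. simpl. nra. }
    assert (1 / (2 * INR m ^ 2) <= 1 / (INR m * (INR m + 1))).
    { apply Rmult_le_compat_l; [lra|]. apply Rinv_le_contravar. nra. simpl. nra. }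
    assert (1 / (6 * INR m ^ 2) + 1 / (3 * INR m ^ 2) = 1 / (2 * INR m ^ 2)) by (field; lra).
    lra.
Qed.

Lemma LS_tele m t : (1 <= m)%nat -> 0 <= LS m - LS (m + t) <= 1 / INR m - 1 / INR (m + t).
Proof.
  intros Hm. induction t.
  - rewrite Nat.add_0_r. lra.
  - pose proof (LS_step (m + t) ltac:(lia)). rewrite <- plus_n_Sm. lra.
Qed.

Lemma wa_fact m : ln (wa m) = lf (2 * m) - 2 * INR m * ln 2 - 2 * lf m.
Proof.
  induction m.
  - simpl. unfold lf. simpl. rewrite ln_1. ring.
  - cbn [wa]. pose proof (wa_pos m). pose proof (pos_INR m).
    unfold Rdiv. rewrite !ln_mult, ln_Rinv, IHm; try lra.
    2: { apply Rmult_lt_0_compat; lra. }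
    2: { apply Rinv_0_lt_compat; lra. }
    replace (2 * S m)%nat with (S (S (2 * m))) by lia.
    rewrite !lf_S, !S_INR, mult_INR.
    replace (2 * INR m + 2) with (2 * (INR m + 1)) by ring.
    rewrite ln_mult by lra.
    replace (INR 2) with 2 by (simpl; ring).
    replace (2 * INR m + 1 + 1) with (2 * (INR m + 1)) by ring.
    rewrite ln_mult by lra. ring.
Qed.

Lemma LS_wallis m : (1 <= m)%nat -> ln (2 * PI) <= 2 * LS m - LS (2 * m).
Proof.
  intros Hm. destruct m as [|k]. lia.
  pose proof (wallis k). set (m := S k) in *.
  assert (Hm' : 1 <= INR m) by (apply (le_INR 1); auto).
  pose proof (wa_pos m). pose proof PI_RGT_0.
  assert (E : 2 * LS m - LS (2 * m) = ln (2 / (INR m * wa m ^ 2))).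
  { unfold LS. rewrite mult_INR. replace (INR 2) with 2 by (simpl; ring).
    assert (0 < wa m ^ 2) by (apply pow_lt; lra).
    assert (0 < INR m * wa m ^ 2) by (apply Rmult_lt_0_compat; lra).
    unfold Rdiv. rewrite (ln_mult 2 (/ (INR m * wa m ^ 2))), ln_Rinv, (ln_mult (INR m)), ln_pow, (wa_fact m), (ln_mult 2 (INR m)); try lra.
    2: apply Rinv_0_lt_compat; lra.
    replace (INR 2) with 2 by (simpl; ring). ring. }
  rewrite E. apply ln_le'. nra.
  apply (Rmult_le_reg_r (INR m * wa m ^ 2)). apply Rmult_lt_0_compat; try apply pow_lt; lra.
  assert (0 < INR m * wa m ^ 2) by (apply Rmult_lt_0_compat; try apply pow_lt; lra).
  replace (2 / (INR m * wa m ^ 2) * (INR m * wa m ^ 2)) with 2 by (field; lra). nra.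
Qed.

Lemma LS_ge m : (1 <= m)%nat -> ln (2 * PI) <= LS m.
Proof.
  intros Hm.
  assert (Hlow : forall M, (1 <= M)%nat -> ln (2 * PI) - 1 / (2 * INR M) <= LS M).
  { intros M HM. pose proof (LS_wallis M HM). pose proof (LS_tele M M HM).
    replace (M + M)%nat with (2 * M)%nat in H0 by lia.
    rewrite mult_INR in H0. replace (INR 2) with 2 in H0 by (simpl; ring).
    assert (1 <= INR M) by (apply (le_INR 1); auto).
    replace (1 / INR M - 1 / (2 * INR M)) with (1 / (2 * INR M)) in H0 by (field; lra). lra. }
  destruct (Rle_lt_dec (ln (2 * PI)) (LS m)) as [|Hlt]; auto. exfalso.
  set (eps := ln (2 * PI) - LS m).
  destruct (archimed (1 / eps)) as [Ha _].
  set (M := (m + Z.to_nat (up (1 / eps)))%nat).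
  assert (HM : (1 <= M)%nat) by lia.
  pose proof (Hlow M HM). pose proof (LS_tele m (Z.to_nat (up (1 / eps))) Hm).
  fold M in H0.
  assert (0 < eps) by (unfold eps; lra).
  assert (1 / eps < INR M).
  { unfold M. rewrite plus_INR, (INR_IZR_INZ (Z.to_nat _)), Z2Nat.id. pose proof (pos_INR m). lra.
    apply le_IZR. pose proof (Rdiv_lt_0_compat 1 eps ltac:(lra) H1). lra. }
  assert (1 / (2 * INR M) < eps).
  { assert (0 < INR M) by (apply lt_0_INR; lia).
    apply (Rmult_lt_reg_r (INR M)); auto. unfold Rdiv. 
    replace (1 * / (2 * INR M) * INR M) with (/2) by (field; lra).
    apply (Rmult_lt_reg_r (/ eps)). apply Rinv_0_lt_compat; auto.
    replace (eps * INR M * / eps) with (INR M) by (field; lra). unfold Rdiv in H2. lra. }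
  unfold eps in *. lra.
Qed.


Lemma lf_LS m : 2 * lf m = LS m - 2 * INR m + (2 * INR m + 1) * ln (INR m).
Proof. unfold LS. ring. Qed.

Lemma binom_bound n k a : (1 <= k)%nat -> (k < n)%nat -> 0 < a ->
  (C n k * a ^ k) ^ 2 <= INR n / (2 * PI * INR k * INR (n - k)) * ((1 + a) ^ n) ^ 2.
Proof.
  intros Hk Hkn Ha.
  assert (Hk' : 1 <= INR k) by (apply (le_INR 1); auto).
  assert (Hr' : 1 <= INR (n - k)) by (apply (le_INR 1); lia).
  assert (Hn' : 1 <= INR n) by (apply (le_INR 1); lia).
  assert (HnE : INR n = INR k + INR (n - k)) by (rewrite <- plus_INR; f_equal; lia).
  pose proof PI_RGT_0.
  assert (HC : 0 < C n k).
  { unfold C. apply Rdiv_lt_0_compat. apply INR_fact_lt_0. apply Rmult_lt_0_compat; apply INR_fact_lt_0. }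
  assert (HlnC : ln (C n k) = lf n - lf k - lf (n - k)).
  { unfold C, lf, Rdiv. rewrite ln_mult, ln_Rinv, ln_mult; try apply INR_fact_lt_0. ring.
    apply Rmult_lt_0_compat; apply INR_fact_lt_0.
    apply Rinv_0_lt_compat, Rmult_lt_0_compat; apply INR_fact_lt_0. }
  assert (HLS1 : LS n <= LS k).
  { pose proof (LS_tele k (n - k) Hk). replace (k + (n - k))%nat with n in H0 by lia. lra. }
  assert (HLS2 : ln (2 * PI) <= LS (n - k)) by (apply LS_ge; lia).
  set (K := INR k) in *. set (Rr := INR (n - k)) in *. set (N := INR n) in *.
  assert (E1 : ln N + ln a - ln K - ln (1 + a) <= N * a / (K * (1 + a)) - 1).
  { assert (0 < K * (1 + a)) by nra.
    assert (0 < N * a) by nra.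
    pose proof (ln_le_sub1 (N * a / (K * (1 + a))) ltac:(apply Rdiv_lt_0_compat; lra)).
    unfold Rdiv in H2 |- *. rewrite ln_mult, ln_mult, ln_Rinv, ln_mult in H2; try lra.
    apply Rinv_0_lt_compat; lra. }
  assert (E2 : ln N - ln Rr - ln (1 + a) <= N / (Rr * (1 + a)) - 1).
  { assert (0 < Rr * (1 + a)) by nra.
    pose proof (ln_le_sub1 (N / (Rr * (1 + a))) ltac:(apply Rdiv_lt_0_compat; lra)).
    unfold Rdiv in H1 |- *. rewrite ln_mult, ln_Rinv, ln_mult in H1; try lra.
    apply Rinv_0_lt_compat; lra. }
  assert (Hsum : K * (N * a / (K * (1 + a)) - 1) + Rr * (N / (Rr * (1 + a)) - 1) = 0).
  { field_simplify; try lra. rewrite HnE. field. lra. }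
  assert (Hent : K * (ln N + ln a - ln K - ln (1 + a)) + Rr * (ln N - ln Rr - ln (1 + a)) <= 0).
  { apply Rmult_le_compat_l with (r := K) in E1; [|lra].
    apply Rmult_le_compat_l with (r := Rr) in E2; [|lra]. lra. }
  apply ln_le_inv.
  - apply pow_lt. apply Rmult_lt_0_compat; auto. apply pow_lt; lra.
  - apply Rmult_lt_0_compat. apply Rdiv_lt_0_compat. lra.
    apply Rmult_lt_0_compat; [apply Rmult_lt_0_compat|]; lra. apply pow_lt, pow_lt; lra.
  - rewrite ln_pow, ln_mult, ln_pow, HlnC; try lra; try (apply pow_lt; lra).
    assert (L1 : ln (N * / (2 * PI * K * Rr) * ((1 + a) ^ n) ^ 2)
       = ln N - (ln 2 + ln PI + ln K + ln Rr) + 2 * (N * ln (1 + a))).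
    { assert (0 < 2 * PI * K * Rr) by (apply Rmult_lt_0_compat; [apply Rmult_lt_0_compat|]; lra).
      rewrite (ln_mult (N * / (2 * PI * K * Rr))), (ln_mult N), ln_Rinv, (ln_mult (2 * PI * K)),
        (ln_mult (2 * PI)), (ln_mult 2), ln_pow, ln_pow; try lra.
      simpl INR. fold N. ring.
      apply pow_lt; lra. apply Rmult_lt_0_compat; lra. apply Rinv_0_lt_compat; lra.
      apply Rmult_lt_0_compat; try apply Rinv_0_lt_compat; lra. apply pow_lt, pow_lt; lra. }
    unfold Rdiv. rewrite L1.
    pose proof (lf_LS n). pose proof (lf_LS k). pose proof (lf_LS (n - k)). fold K Rr N in H0, H1, H2.
    rewrite ln_mult in HLS2 by lra.
    replace (INR 2) with 2 by (simpl; ring). fold K.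
    assert (Hx : 2 * (lf n - lf k - lf (n - k) + K * ln a) =
       (LS n - LS k - LS (n - k)) + (2 * N + 1) * ln N - (2 * K + 1) * ln K - (2 * Rr + 1) * ln Rr + 2 * K * ln a).
    { rewrite HnE in H0. rewrite HnE. lra. }
    rewrite Hx. rewrite HnE in Hent |- *. 
    assert (2 * (K * (ln (K + Rr) + ln a - ln K - ln (1 + a)) + Rr * (ln (K + Rr) - ln Rr - ln (1 + a))) <= 0) by lra.
    ring_simplify. ring_simplify in H3. lra.
  - apply Rmult_lt_0_compat; auto. apply pow_lt; lra.
Qed.


Lemma C_ratio n k : (k < n)%nat -> C n (S k) * INR (S k) = C n k * INR (n - k).
Proof.
  intros H. unfold C.
  replace (n - k)%nat with (S (n - S k)) by lia.
  rewrite (fact_simpl k), (fact_simpl (n - S k)), !mult_INR.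
  pose proof (INR_fact_lt_0 k). pose proof (INR_fact_lt_0 (n - S k)). pose proof (INR_fact_lt_0 n).
  pose proof (pos_INR k). pose proof (pos_INR (n - S k)). rewrite !S_INR.
  field. lra.
Qed.

Lemma C_pos n k : 0 < C n k.
Proof. unfold C. apply Rdiv_lt_0_compat. apply INR_fact_lt_0. apply Rmult_lt_0_compat; apply INR_fact_lt_0. Qed.

Lemma step_up n k a : 0 < a -> INR k * (1 + a) <= INR n * a - 1 -> (k < n)%nat ->
  C n k * a ^ k <= C n (S k) * a ^ (S k).
Proof.
  intros Ha H Hk. pose proof (C_ratio n k Hk). rewrite S_INR, minus_INR in H0 by lia.
  pose proof (pos_INR k). pose proof (C_pos n k). pose proof (C_pos n (S k)).
  assert (C n (S k) = C n k * (INR n - INR k) / (INR k + 1)) by (rewrite <- H0; field; lra).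
  rewrite H4. simpl. assert (0 < a ^ k) by (apply pow_lt; lra).
  unfold Rdiv. 
  assert (1 <= (INR n - INR k) * a * / (INR k + 1)).
  { apply (Rmult_le_reg_r (INR k + 1)). lra. rewrite Rmult_assoc, Rinv_l by lra. nra. }
  assert (0 < C n k * a ^ k) by (apply Rmult_lt_0_compat; lra).
  replace (C n k * (INR n - INR k) * / (INR k + 1) * (a * a ^ k)) with
    ((C n k * a ^ k) * ((INR n - INR k) * a * / (INR k + 1))) by ring. nra.
Qed.

Lemma step_down n k a : 0 < a -> (INR n + 1) * a <= INR (S k) * (1 + a) -> (k < n)%nat ->
  C n (S k) * a ^ (S k) <= C n k * a ^ k.
Proof.
  intros Ha H Hk. pose proof (C_ratio n k Hk). rewrite S_INR, minus_INR in H0 by lia.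
  rewrite S_INR in H.
  pose proof (pos_INR k). pose proof (C_pos n k). pose proof (C_pos n (S k)).
  assert (C n (S k) = C n k * (INR n - INR k) / (INR k + 1)) by (rewrite <- H0; field; lra).
  rewrite H4. simpl. assert (0 < a ^ k) by (apply pow_lt; lra).
  unfold Rdiv.
  assert ((INR n - INR k) * a * / (INR k + 1) <= 1).
  { apply (Rmult_le_reg_r (INR k + 1)). lra. rewrite Rmult_assoc, Rinv_l by lra. nra. }
  assert (0 < C n k * a ^ k) by (apply Rmult_lt_0_compat; lra).
  replace (C n k * (INR n - INR k) * / (INR k + 1) * (a * a ^ k)) with
    ((C n k * a ^ k) * ((INR n - INR k) * a * / (INR k + 1))) by ring. nra.
Qed.

Lemma mode_bound n a B : 0 < a ->
  (forall j, (j <= n)%nat -> INR n * a - 1 <= INR j * (1 + a) <= (INR n + 1) * a -> C n j * a ^ j <= B) ->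
  forall k, (k <= n)%nat -> C n k * a ^ k <= B.
Proof.
  intros Ha Hg.
  assert (LA : forall k, (k <= n)%nat -> INR n * a - 1 <= INR k * (1 + a) -> C n k * a ^ k <= B).
  { induction k; intros Hk H1.
    - apply Hg; auto. split; auto. simpl. pose proof (pos_INR n). nra.
    - destruct (Rle_lt_dec (INR (S k) * (1 + a)) ((INR n + 1) * a)).
      + apply Hg; auto.
      + eapply Rle_trans. apply step_down; auto; try lra; lia.
        apply IHk. lia. rewrite S_INR in r. nra. }
  assert (LB : forall t k, (k + t = n)%nat -> C n k * a ^ k <= B).
  { induction t; intros k Hk.
    - apply LA. lia. replace k with n by lia. pose proof (pos_INR n). nra.
    - destruct (Rle_lt_dec (INR n * a - 1) (INR k * (1 + a))).
      + apply LA; auto. lia.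
      + eapply Rle_trans. apply step_up; auto; try lra; lia.
        apply IHt. lia. }
  intros k Hk. apply (LB (n - k)%nat). lia.
Qed.


Lemma cut_lt x : 0 < x -> x < INR (Z.to_nat (floorZ x + 1)).
Proof.
  intros Hx. unfold floorZ. destruct (base_Int_part x).
  assert (0 <= Int_part x + 1)%Z by (apply le_IZR; rewrite plus_IZR; simpl; lra).
  rewrite INR_IZR_INZ, Z2Nat.id by lia. rewrite plus_IZR. simpl (IZR 1). lra.
Qed.

Lemma fold_pos (l : list nat) (p : nat -> R) : (forall j, In j l -> 0 < p j < 1) ->
  0 < fold_right Rmult 1 (map (fun j => p j / (1 - p j)) l).
Proof.
  induction l; simpl; intros H. lra.
  apply Rmult_lt_0_compat. destruct (H a (or_introl eq_refl)). apply Rdiv_lt_0_compat; lra.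
  apply IHl; auto.
Qed.

Theorem proposition14 (d : nat) (p : nat -> R) (lambda : R) :
  (3 <= d)%nat ->
  (forall j, (j < d)%nat -> 0 < p j < 1) ->
  0 < lambda < 1 ->
  let P := Pprod d p in
  let alpha := Rpower P (1 / INR d) in
  forall n : nat, le (Ncutoff alpha lambda) n ->
    sum_f_R0 (fun k => (C n k) ^ d * P ^ k) n
    <= (Mbound alpha lambda / sqrt (2 * PI)) ^ (d - 1)
       * Rpower (INR n) (- (INR d - 1) / 2)
       * (1 + alpha) ^ (d * n).
Proof.
  intros Hd Hp Hl P alpha n Hn.
  assert (HP : 0 < P).
  { unfold P, Pprod. apply fold_pos. intros j Hj. apply Hp. apply in_seq in Hj. lia. }
  assert (Ha : 0 < alpha) by (unfold alpha, Rpower; apply exp_pos).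
  assert (Hd' : 3 <= INR d) by (replace 3 with (INR 3) by (simpl; ring); apply le_INR; auto).
  assert (HaP : alpha ^ d = P).
  { unfold alpha. rewrite <- Rpower_pow by (unfold Rpower; apply exp_pos).
    rewrite Rpower_mult. replace (1 / INR d * INR d) with 1 by (field; lra). apply Rpower_1; auto. }
  unfold Ncutoff in Hn.
  assert (H1 : alpha / lambda < INR n).
  { eapply Rlt_le_trans. apply cut_lt. apply Rdiv_lt_0_compat; lra. apply le_INR. lia. }
  assert (H2 : 1 / (lambda * alpha) < INR n).
  { eapply Rlt_le_trans. apply cut_lt. apply Rdiv_lt_0_compat. lra. apply Rmult_lt_0_compat; lra. apply le_INR. lia. }
  assert (H1' : alpha < lambda * INR n).
  { apply (Rmult_lt_compat_l lambda) in H1; [|lra]. replace (lambda * (alpha / lambda)) with alpha in H1 by (field; lra). lra. }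
  assert (H2' : 1 < lambda * alpha * INR n).
  { assert (0 < lambda * alpha) by (apply Rmult_lt_0_compat; lra).
    apply (Rmult_lt_compat_l (lambda * alpha)) in H2; [|lra]. replace (lambda * alpha * (1 / (lambda * alpha))) with 1 in H2 by (field; lra). lra. }
  assert (Hnpos : 0 < INR n) by nra.
  set (s := Rpower (INR n) (- 1 / 2)).
  assert (Hs : 0 < s) by (unfold s, Rpower; apply exp_pos).
  assert (Hss : s * s = / INR n).
  { unfold s. rewrite <- Rpower_plus. replace (-1/2 + -1/2) with (- (1)) by field.
    rewrite Rpower_Ropp, Rpower_1; auto. }
  set (M := Mbound alpha lambda).
  assert (HM : 0 < M).
  { unfold M, Mbound. apply Rmult_lt_0_compat. apply Rdiv_lt_0_compat. lra. apply sqrt_lt_R0; lra.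
    apply Rdiv_lt_0_compat; lra. }
  assert (HM2 : M * M = (alpha + 1) ^ 2 / (alpha * (1 - lambda) ^ 2)).
  { unfold M, Mbound. pose proof (sqrt_sqrt alpha ltac:(lra)). pose proof (sqrt_lt_R0 alpha Ha).
    replace (alpha * (1 - lambda) ^ 2) with (sqrt alpha * sqrt alpha * (1 - lambda) ^ 2) by (rewrite H; ring). field. lra. }
  pose proof PI_RGT_0.
  assert (Hsq : 0 < sqrt (2 * PI)) by (apply sqrt_lt_R0; lra).
  assert (Hsq2 : sqrt (2 * PI) * sqrt (2 * PI) = 2 * PI) by (apply sqrt_sqrt; lra).
  set (B := M / sqrt (2 * PI) * s * (1 + alpha) ^ n).
  assert (HX : 0 < (1 + alpha) ^ n) by (apply pow_lt; lra).
  assert (HBpos : 0 < B) by (unfold B; apply Rmult_lt_0_compat; auto; apply Rmult_lt_0_compat; auto; apply Rdiv_lt_0_compat; auto).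
  assert (HB : forall k, (k <= n)%nat -> C n k * alpha ^ k <= B).
  { apply mode_bound; auto. intros j Hj [Hlo Hhi].
    assert (Hj1 : (1 <= j)%nat).
    { destruct j. simpl in Hlo. nra. lia. }
    assert (Hjn : (j < n)%nat).
    { apply INR_lt. nra. }
    pose proof (binom_bound n j alpha Hj1 Hjn Ha).
    assert (Hj' : 1 <= INR j) by (apply (le_INR 1); auto).
    rewrite minus_INR in H0 by lia.
    set (r := INR n - INR j) in *.
    assert (Hr : 0 < r) by (unfold r; apply Rlt_Rminus, lt_INR; auto).
    assert (Hkey : INR n * INR n * alpha * (1 - lambda) ^ 2 <= INR j * r * (1 + alpha) ^ 2).
    { assert (A1 : INR n * alpha * (1 - lambda) <= INR j * (1 + alpha)) by nra.
      assert (A2 : INR n * (1 - lambda) <= r * (1 + alpha)) by (unfold r; nra).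
      assert (0 <= INR n * alpha * (1 - lambda)) by (apply Rmult_le_pos; nra).
      assert (0 <= INR n * (1 - lambda)) by nra.
      pose proof (Rmult_le_compat _ _ _ _ H3 H4 A1 A2). nra. }
    assert (HB2 : B ^ 2 = (alpha + 1) ^ 2 / (alpha * (1 - lambda) ^ 2) / (2 * PI) / INR n * ((1 + alpha) ^ n) ^ 2).
    { unfold B.
      replace ((M / sqrt (2 * PI) * s * (1 + alpha) ^ n) ^ 2)
        with ((M * M) / (sqrt (2 * PI) * sqrt (2 * PI)) * (s * s) * ((1 + alpha) ^ n) ^ 2) by (field; lra).
      rewrite HM2, Hsq2, Hss. field. repeat split; try lra. }
    assert (Hcmp : INR n / (2 * PI * INR j * r) <= (alpha + 1) ^ 2 / (alpha * (1 - lambda) ^ 2) / (2 * PI) / INR n).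
    { assert (E : (alpha + 1) ^ 2 / (alpha * (1 - lambda) ^ 2) / (2 * PI) / INR n - INR n / (2 * PI * INR j * r)
         = (INR j * r * (1 + alpha) ^ 2 - INR n * INR n * alpha * (1 - lambda) ^ 2) / (2 * PI * INR j * r * alpha * (1 - lambda) ^ 2 * INR n)).
      { field. repeat split; lra. }
      assert (0 <= (INR j * r * (1 + alpha) ^ 2 - INR n * INR n * alpha * (1 - lambda) ^ 2) / (2 * PI * INR j * r * alpha * (1 - lambda) ^ 2 * INR n)).
      { apply Rmult_le_pos. lra. apply Rlt_le, Rinv_0_lt_compat.
        assert (0 < (1 - lambda)^2) by (apply pow_lt; lra).
        apply Rmult_lt_0_compat; [|lra]; apply Rmult_lt_0_compat; [|lra]; apply Rmult_lt_0_compat; [|lra];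
        apply Rmult_lt_0_compat; [|lra]; apply Rmult_lt_0_compat; lra. }
      lra. }
    assert (Hsq' : (C n j * alpha ^ j) ^ 2 <= B ^ 2).
    { rewrite HB2. eapply Rle_trans. apply H0. apply Rmult_le_compat_r. apply pow2_ge_0. auto. }
    assert (0 < C n j * alpha ^ j) by (apply Rmult_lt_0_compat; [apply C_pos| apply pow_lt; lra]).
    nra. }
  assert (HS1 : sum_f_R0 (fun k => C n k ^ d * P ^ k) n = sum_f_R0 (fun k => (C n k * alpha ^ k) ^ d) n).
  { apply sum_eq. intros i _. rewrite <- HaP, Rpow_mult_distr, <- !pow_mult, Nat.mul_comm. reflexivity. }
  rewrite HS1.
  assert (HS2 : sum_f_R0 (fun k => (C n k * alpha ^ k) ^ d) n <= sum_f_R0 (fun k => (C n k * alpha ^ k) * B ^ (d - 1)) n).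
  { apply sum_Rle. intros i Hi.
    assert (0 <= C n i * alpha ^ i) by (apply Rmult_le_pos; [left; apply C_pos | apply pow_le; lra]).
    replace d with (S (d - 1)) at 1 by lia. simpl.
    apply Rmult_le_compat_l; auto. apply pow_incr. split; auto. }
  rewrite <- scal_sum in HS2.
  assert (HS3 : sum_f_R0 (fun k => C n k * alpha ^ k) n = (1 + alpha) ^ n).
  { rewrite Rplus_comm, binomial. apply sum_eq. intros i _. rewrite pow1. ring. }
  rewrite HS3 in HS2. eapply Rle_trans. apply HS2.
  right. unfold B. rewrite !Rpow_mult_distr.
  assert (Es : s ^ (d - 1) = Rpower (INR n) (- (INR d - 1) / 2)).
  { rewrite <- Rpower_pow by auto. unfold s. rewrite Rpower_mult, minus_INR by lia. f_equal. simpl. field. }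
  rewrite Es. fold M.
  replace (d * n)%nat with (n * (d - 1) + n)%nat by (destruct d; [lia|]; simpl; rewrite Nat.sub_0_r; lia).
  rewrite pow_add, pow_mult. ring.
Qed.
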